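(* Let $G=D_\infty=\langle s\rangle\rtimes\langle t\rangle$ and let $\alpha,\beta:\mathbb{Z}\curvearrowright X_0$ be two minimal topologically free continuous actions on a compact Hausdorff space $X_0$. Let $\widetilde\alpha,\widetilde\beta:G\curvearrowright X:=G/\mathbb{Z}\times X_0$ be the associated induced actions (with $\mathbb{Z}=\langle s\rangle$ and lift $L(\mathbb{Z})=e$, $L(t\mathbb{Z})=t$). Then: (1) if $\widetilde\alpha$ and $\widetilde\beta$ are continuously orbit equivalent via the identity homeomorphism of $X$ (i.e. there are continuous $c,c':G\times X\to G$ with $\widetilde\alpha_g(\tilde x)=\widetilde\beta_{c(g,\tilde x)}(\tilde x)$ and $\widetilde\beta_g(\tilde x)=\widetilde\alpha_{c'(g,\tilde x)}(\tilde x)$), then $\alpha$ and $\beta$ are continuously orbit equivalent; (2) if $\alpha$ and $\beta$ are continuously orbit equivalent, then $\widetilde\alpha$ and $\widetilde\beta$ are conjugate.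
   Context: Induced action: with $\delta:G\times G/\mathbb{Z}\to\mathbb{Z}$, $\delta(g,g'\mathbb{Z})=L(gg'\mathbb{Z})^{-1}gL(g'\mathbb{Z})$, set $\widetilde\alpha_g(g'\mathbb{Z},x)=(gg'\mathbb{Z},\ \alpha_{\delta(g,g'\mathbb{Z})}(x))$, and similarly for $\beta$. Continuous orbit equivalence of two actions $\gamma,\gamma'$ of a group $\Gamma$ on a space $Z$: a homeomorphism $\phi:Z\to Z$ with inverse $\psi$ and continuous $a,b:\Gamma\times Z\to\Gamma$ with $\phi(\gamma_g z)=\gamma'_{a(g,z)}\phi(z)$ and $\psi(\gamma'_h z)=\gamma_{b(h,z)}\psi(z)$. Conjugacy: a homeomorphism $\phi$ and an automorphism $\tau$ of $\Gamma$ with $\phi(\gamma_g z)=\gamma'_{\tau(g)}\phi(z)$ for all $g,z$. *)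

(* Defs.v *)
From HB Require Import structures.
From mathcomp Require Import all_boot all_order all_algebra.
From mathcomp Require Import all_classical all_reals all_analysis.
Set Implicit Arguments. Unset Strict Implicit. Unset Printing Implicit Defensive.
Import Order.TTheory GRing.Theory Num.Theory.
Local Open Scope classical_set_scope.
Local Open Scope ring_scope.

(* (n, b) stands for s^n t^b ; t s t^-1 = s^-1. *)
Definition Dinf := (int * bool)%type.
Definition dmul (g h : Dinf) : Dinf :=
  (g.1 + (if g.2 then - h.1 else h.1), xorb g.2 h.2).
Definition dinv (g : Dinf) : Dinf := ((if g.2 then g.1 else - g.1), g.2).
Definition done_ : Dinf := (0, false).
Definition ds : Dinf := (1, false).
Definition dt : Dinf := (0, true).
Definition dZ (n : int) : Dinf := (n, false).

(* G/Z is identified with bool: false = Z, true = tZ.  coset map g |-> gZ *)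
Definition dcoset (g : Dinf) : bool := g.2.
Definition dcoset_act (g : Dinf) (c : bool) : bool := dcoset (dmul g (if c then dt else done_)).
Definition Llift (c : bool) : Dinf := if c then dt else done_.

(* cocycle delta(g, g'Z) = L(gg'Z)^-1 g L(g'Z), an element of Z = <s>,
   returned as its exponent n (delta = s^n). *)
Definition delta (g : Dinf) (c : bool) : int :=
  (dmul (dinv (Llift (dcoset_act g c))) (dmul g (Llift c))).1.

Definition dinf_automorphism (tau : Dinf -> Dinf) : Prop :=
  bijective tau /\ forall g h, tau (dmul g h) = dmul (tau g) (tau h).

Section ZActions.
Variable X0 : topologicalType.

Definition is_Zaction (a : int -> X0 -> X0) : Prop :=
  (forall x, a 0 x = x) /\ (forall m n x, a (m + n) x = a m (a n x)) /\
  (forall n, continuous (a n)).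

Definition Zminimal (a : int -> X0 -> X0) : Prop :=
  forall x, closure (range (fun n => a n x)) = [set: X0].

Definition Ztopfree (a : int -> X0 -> X0) : Prop :=
  forall n : int, n != 0 -> interior [set x | a n x = x] = set0.
End ZActions.

(* continuity of a map into a discrete group (Z or D_inf) = local constancy *)
Definition cont_discr {T : topologicalType} {A : Type} (f : T -> A) : Prop :=
  forall x, \forall y \near x, f y = f x.

Definition homeo {T : topologicalType} (phi psi : T -> T) : Prop :=
  continuous phi /\ continuous psi /\ cancel phi psi /\ cancel psi phi.

Definition Z_coe {X0 : topologicalType} (a b : int -> X0 -> X0) : Prop :=
  exists (phi psi : X0 -> X0) (ca cb : int -> X0 -> int),
    homeo phi psi /\ (forall n, cont_discr (ca n)) /\ (forall n, cont_discr (cb n)) /\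
    (forall n x, phi (a n x) = b (ca n x) (phi x)) /\
    (forall n x, psi (b n x) = a (cb n x) (psi x)).

Definition ind_act {X0 : Type} (a : int -> X0 -> X0) (g : Dinf)
  (p : bool * X0) : bool * X0 :=
  (dcoset_act g p.1, a (delta g p.1) p.2).

Definition Dinf_conj {Z : topologicalType} (ga gb : Dinf -> Z -> Z) : Prop :=
  exists (phi psi : Z -> Z) (tau : Dinf -> Dinf),
    homeo phi psi /\ dinf_automorphism tau /\
    forall g z, phi (ga g z) = gb (tau g) (phi z).

(* Main.v *)
Require Import Defs.
Set Warnings "-all".
From HB Require Import structures.
From mathcomp Require Import all_boot all_order all_algebra.
From mathcomp Require Import all_classical all_reals all_analysis.
From mathcomp Require Import zify.
Import Order.TTheory GRing.Theory Num.Theory.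
Local Open Scope classical_set_scope.
Local Open Scope ring_scope.
Set Implicit Arguments. Unset Strict Implicit. Unset Printing Implicit Defensive.
Implicit Types (k : int -> int) (M R : int).
Definition stepb (M : int) (k : int -> int) := forall n, -M <= k (n+1) - k n <= M.
Definition coverk (k : int -> int) (N : nat) (R : int) :=
  forall v, -R <= v <= R -> exists n, -(N%:Z) <= n <= N%:Z /\ k n = v.
Definition Pp (k : int -> int) (R : int) (N : nat) :=
  coverk k N R /\ R < k N%:Z /\ k (- N%:Z) < - R.
Definition Pm (k : int -> int) (R : int) (N : nat) :=
  coverk k N R /\ k N%:Z < - R /\ R < k (- N%:Z).
Definition goodk (M : int) (k : int -> int) :=
  k 0 = 0 /\ injective k /\ (forall v, exists n, k n = v) /\ stepb M k.

Lemma stepb_ge0 M k : stepb M k -> 0 <= M.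
Proof. move=> /(_ 0) H; lia. Qed.

Lemma right_stay M R N k : injective k -> stepb M k -> M <= R -> coverk k N R ->
  R < k N%:Z -> forall n, N%:Z <= n -> R < k n.
Proof.
move=> inj st MR cov kN.
have M0 := stepb_ge0 st.
have H : forall m : nat, R < k (N%:Z + m%:Z).
  elim=> [|m IH]; first by rewrite addr0.
  have := st (N%:Z + m%:Z).
  have -> : N%:Z + m%:Z + 1 = N%:Z + m.+1%:Z by lia.
  move=> Hs.
  case: (ltrP R (k (N%:Z + m.+1%:Z))) => // Hle.
  have [n [Hn Hkn]] : exists n, -(N%:Z) <= n <= N%:Z /\ k n = k (N%:Z + m.+1%:Z).
    apply: cov; lia.
  have := inj _ _ Hkn; lia.
move=> n Hn.
have := H (absz (n - N%:Z)).
have -> // : N%:Z + (absz (n - N%:Z))%:Z = n by lia.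
Qed.

Lemma stepb_neg M k : stepb M k -> stepb M (fun n => - k n).
Proof. move=> st n; have := st n; lia. Qed.
Lemma stepb_rev M k : stepb M k -> stepb M (fun n => k (- n)).
Proof.
move=> st n; have := st (- n - 1).
have -> : - n - 1 + 1 = - n by lia.
have -> : - (n + 1) = - n - 1 by lia.
lia.
Qed.
Lemma coverk_neg k N R : coverk k N R -> coverk (fun n => - k n) N R.
Proof.
move=> cov v Hv; have [n [Hn Hk]] := cov (- v) ltac:(lia).
exists n; split=> //; lia.
Qed.
Lemma coverk_rev k N R : coverk k N R -> coverk (fun n => k (- n)) N R.
Proof.
move=> cov v Hv; have [n [Hn Hk]] := cov v Hv.
exists (- n); split; first lia. by rewrite opprK.
Qed.
Lemma inj_neg (k : int -> int) : injective k -> injective (fun n => - k n).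
Proof. by move=> inj a b /oppr_inj /inj. Qed.
Lemma inj_rev (k : int -> int) : injective k -> injective (fun n => k (- n)).
Proof. by move=> inj a b /inj /oppr_inj. Qed.

Lemma RS1 M R N k : injective k -> stepb M k -> M <= R -> coverk k N R ->
  R < k N%:Z -> forall n, N%:Z <= n -> R < k n.
Proof. exact: right_stay. Qed.
Lemma RS2 M R N k : injective k -> stepb M k -> M <= R -> coverk k N R ->
  k N%:Z < - R -> forall n, N%:Z <= n -> k n < - R.
Proof.
move=> inj st MR cov kN n Hn.
have := right_stay (inj_neg inj) (stepb_neg st) MR (coverk_neg cov) ltac:(lia) Hn.
lia.
Qed.
Lemma LS1 M R N k : injective k -> stepb M k -> M <= R -> coverk k N R ->
  R < k (- N%:Z) -> forall n, n <= - N%:Z -> R < k n.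
Proof.
move=> inj st MR cov kN n Hn.
have := right_stay (inj_rev inj) (stepb_rev st) MR (coverk_rev cov) kN (n := - n) ltac:(lia).
by rewrite opprK.
Qed.
Lemma LS2 M R N k : injective k -> stepb M k -> M <= R -> coverk k N R ->
  k (- N%:Z) < - R -> forall n, n <= - N%:Z -> k n < - R.
Proof.
move=> inj st MR cov kN n Hn.
have := LS1 (inj_neg inj) (stepb_neg st) MR (coverk_neg cov) ltac:(lia) Hn.
lia.
Qed.

Lemma goodk_neg M k : goodk M k -> goodk M (fun n => - k n).
Proof.
move=> [k0 [inj [surj st]]]; split; first by rewrite k0 oppr0.
split; first exact: inj_neg.
split; last exact: stepb_neg.
by move=> v; have [n Hn] := surj (- v); exists n; rewrite Hn opprK.
Qed.

Lemma Pm_Pp k R N : Pm k R N -> Pp (fun n => - k n) R N.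
Proof. move=> [cov [H1 H2]]; split; first exact: coverk_neg. lia. Qed.
Lemma Pp_Pm k R N : Pp k R N -> Pm (fun n => - k n) R N.
Proof. move=> [cov [H1 H2]]; split; first exact: coverk_neg. lia. Qed.

Lemma bound_nat M k : k 0 = 0 -> stepb M k -> forall m : nat,
  -(M * m%:Z) <= k m%:Z <= M * m%:Z /\ -(M * m%:Z) <= k (- m%:Z) <= M * m%:Z.
Proof.
move=> k0 st; elim=> [|m IH]; first by rewrite mulr0 oppr0 k0.
have h1 : -M <= k (m%:Z + 1) - k m%:Z <= M := st m%:Z.
have h2 : -M <= k (- m%:Z) - k (- m%:Z - 1) <= M.
  have := st (- m%:Z - 1); have -> // : - m%:Z - 1 + 1 = - m%:Z by lia.
have -> : - m.+1%:Z = - m%:Z - 1 by lia.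
have -> : m.+1%:Z = m%:Z + 1 by lia.
rewrite mulrDr mulr1; lia.
Qed.

Lemma bound_win M k N : k 0 = 0 -> stepb M k -> forall n, -(N%:Z) <= n <= N%:Z ->
  -(M * N%:Z) <= k n <= M * N%:Z.
Proof.
move=> k0 st n Hn; have M0 := stepb_ge0 st.
have [Hp|Hneg] := lerP 0 n.
  have [h _] := bound_nat k0 st (absz n).
  have e : (absz n)%:Z = n by lia.
  rewrite e in h. nia.
have [_ h] := bound_nat k0 st (absz n).
have e : - (absz n)%:Z = n by lia.
have e2 : (absz n)%:Z = - n by lia.
rewrite e in h; rewrite e2 in h. nia.
Qed.

Lemma no_same M R N k : goodk M k -> M <= R -> coverk k N R ->
  R < k N%:Z -> R < k (- N%:Z) -> False.
Proof.
move=> [k0 [inj [surj st]]] MR cov h1 h2.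
have M0 := stepb_ge0 st.
have [n Hn] := surj (- (R + M * N%:Z + 1)).
have [Hin|Hout] := boolP ((-(N%:Z) <= n) && (n <= N%:Z)).
  have := bound_win (N:=N) k0 st Hin. move/andP: Hin => Hin. nia.
have [Hr|Hl] : N%:Z <= n \/ n <= - N%:Z by lia.
  have := RS1 inj st MR cov h1 Hr. nia.
have := LS1 inj st MR cov h2 Hl. nia.
Qed.

Lemma cover_exists k : (forall v, exists n, k n = v) -> k 0 = 0 ->
  forall r : nat, exists N, coverk k N r%:Z.
Proof.
move=> surj k0; elim=> [|r [N IH]].
  exists 0%N => v Hv; exists 0; split; first lia.
  have -> : v = 0 by lia. exact: k0.
have [n1 h1] := surj r.+1%:Z. have [n2 h2] := surj (- r.+1%:Z).
exists (N + absz n1 + absz n2)%N => v Hv.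
have [e1|ne1] := eqVneq v r.+1%:Z.
  exists n1; split; [lia| by rewrite h1 e1].
have [e2|ne2] := eqVneq v (- r.+1%:Z).
  exists n2; split; [lia| by rewrite h2 e2].
have [n [Hn Hk]] := IH v ltac:(lia).
exists n; split=> //; lia.
Qed.

Lemma coverk_mono k N N' R : (N <= N')%N -> coverk k N R -> coverk k N' R.
Proof. move=> le cov v Hv; have [n [Hn Hk]] := cov v Hv; exists n; split=> //; lia. Qed.

Lemma exists_window M R k : goodk M k -> M <= R ->
  exists N, Pp k R N \/ Pm k R N.
Proof.
move=> g MR; have := g; move=> [k0 [inj [surj st]]].
have M0 := stepb_ge0 st.
have [N cov] := cover_exists surj k0 (absz R).
have eR : (absz R)%:Z = R by lia.
rewrite eR in cov.
have cov1 := coverk_mono (leqnSn N) cov.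
have out : forall n, (N%:Z < n \/ n < - N%:Z) -> R < k n \/ k n < - R.
  move=> n Hn; case: (lerP (k n) R) => h1; last by left.
  case: (lerP (- R) (k n)) => h2; last by right.
  have [m [Hm Hkm]] := cov (k n) ltac:(lia).
  have := inj _ _ Hkm; lia.
exists N.+1.
have [a1|a2] := out N.+1%:Z ltac:(lia);
have [b1|b2] := out (- N.+1%:Z) ltac:(lia).
- exfalso; exact: (no_same g MR cov1 a1 b1).
- by left.
- by right.
- exfalso; apply: (no_same (goodk_neg g) MR (coverk_neg cov1)); lia.
Qed.

Lemma incompat M R R' N N' k : injective k -> stepb M k -> M <= R -> M <= R' ->
  Pp k R N -> Pm k R' N' -> False.
Proof.
move=> inj st MR MR' [c1 [p1 p2]] [c2 [m1 m2]].
have M0 := stepb_ge0 st.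
have h1 := RS1 inj st MR c1 p1 (n := (N + N')%:Z) ltac:(lia).
have h2 := RS2 inj st MR' c2 m1 (n := (N + N')%:Z) ltac:(lia).
lia.
Qed.

Lemma Pp_any M N k : goodk M k -> Pp k M N -> forall R, M <= R -> exists N', Pp k R N'.
Proof.
move=> g HP R MR; have [N' [H|H]] := exists_window g MR; first by exists N'.
exfalso; case: g => [_ [inj [_ st]]]; exact: (incompat inj st (lexx M) MR HP H).
Qed.

Lemma shift_inv M N N' m k k' : goodk M k -> goodk M k' ->
  (forall n, k' n = k (n + m) - k m) -> Pm k M N -> Pp k' M N' -> False.
Proof.
move=> g g' sh HM HP.
have [_ [inj [_ st]]] := g.
have M0 := stepb_ge0 st.
have [N2 [c2 [p1 p2]]] := Pp_any g' HP (R := M + (absz (k m))%:Z) ltac:(lia).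
have [c3 [q1 q2]] := HM.
have h1 := RS1 (let: conj _ (conj i _) := g' in i) (let: conj _ (conj _ (conj _ s)) := g' in s)
  (R := M + (absz (k m))%:Z) ltac:(lia) c2 p1 (n := N2%:Z + N%:Z + (absz m)%:Z) ltac:(lia).
have h2 := RS2 inj st (lexx M) c3 q1 (n := N2%:Z + N%:Z + (absz m)%:Z + m) ltac:(lia).
rewrite sh in h1. lia.
Qed.

Lemma shift_inv' M N N' m k k' : goodk M k -> goodk M k' ->
  (forall n, k' n = k (n + m) - k m) -> Pp k M N -> Pm k' M N' -> False.
Proof.
move=> g g' sh HP HM.
apply: (shift_inv (m := m) (goodk_neg g) (goodk_neg g') _ (Pp_Pm HP) (Pm_Pp HM)).
move=> n; rewrite sh; lia.
Qed.
Fixpoint win (L : nat) : seq int :=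
  if L is L'.+1 then (- L%:Z) :: rcons (win L') (L%:Z) else [:: 0].

Lemma mem_win L n : (n \in win L) = (- L%:Z <= n <= L%:Z).
Proof.
elim: L => [|L IH] /=; first by rewrite in_cons in_nil orbF; apply/eqP/idP; lia.
rewrite in_cons mem_rcons in_cons IH.
apply/idP/idP.
  case/orP => [/eqP->|/orP [/eqP->|h]]; lia.
move=> h; have [e|ne] := eqVneq n (- L.+1%:Z); first by [].
have [e|ne2] := eqVneq n L.+1%:Z; first by [].
rewrite /=; move/eqP: ne; move/eqP: ne2; lia.
Qed.

Lemma uniq_win L : uniq (win L).
Proof.
elim: L => [|L IH] //=.
rewrite rcons_uniq IH mem_rcons in_cons !mem_win !negb_or; apply/and3P; split.
- apply/eqP; lia.
- apply/negP; lia.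
- apply/negP; lia.
Qed.

Definition val k L : int := (count (fun n => 0 <= k n) (win L))%:Z - (L.+1)%:Z.

Lemma count_win P L : count P (win L.+1) = (P (- L.+1%:Z) + count P (win L) + P L.+1%:Z)%N.
Proof. by rewrite /= -cats1 count_cat /= addn0 addnA. Qed.

Lemma val_step M R N k : goodk M k -> M <= R -> Pp k R N ->
  forall L, (N <= L)%N -> val k L.+1 = val k L.
Proof.
move=> [k0 [inj [surj st]]] MR [cov [p1 p2]] L NL.
have M0 := stepb_ge0 st.
have a := LS2 inj st MR cov p2 (n := - L.+1%:Z) ltac:(lia).
have b := RS1 inj st MR cov p1 (n := L.+1%:Z) ltac:(lia).
rewrite /val count_win.
have -> : (0 <= k (- L.+1%:Z)) = false by apply/negbTE; rewrite -ltNge; lia.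
have -> : (0 <= k L.+1%:Z) = true by lia.
lia.
Qed.

Lemma val_const M R N k : goodk M k -> M <= R -> Pp k R N ->
  forall L, (N <= L)%N -> val k L = val k N.
Proof.
move=> g MR HP L NL.
have : forall d, val k (N + d) = val k N.
  elim=> [|d IH]; first by rewrite addn0.
  by rewrite addnS (val_step g MR HP) ?leq_addr.
by move/(_ (L - N)%N); rewrite subnKC.
Qed.

Lemma shift_count (P : pred int) L :
  (count P [seq (n + 1)%R | n <- win L] + P (- L%:Z) = count P (win L) + P L.+1%:Z)%N.
Proof.
elim: L => [|L IH]; first by rewrite /= !addn0 addnC.
rewrite count_win /= map_rcons -cats1 count_cat /= addn0.
have e1 : - L.+1%:Z + 1 = - L%:Z by lia.
have e2 : L.+1%:Z + 1 = L.+2%:Z by lia.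
rewrite e1 e2.
move: IH; move: (count P _) (count P (win L)) (nat_of_bool (P (- L%:Z))) (nat_of_bool (P (- L.+1%:Z)))
  (nat_of_bool (P L.+1%:Z)) (nat_of_bool (P L.+2%:Z)) => a b c d e f; lia.
Qed.

Lemma count_one k N R L b : injective k -> coverk k N R -> (N <= L)%N -> -R <= b <= R ->
  count (fun n => b <= k n) (win L) = (count (fun n => (b + 1 <= k n)%R) (win L) + 1)%N.
Proof.
move=> inj cov NL Hb.
have := count_predUI (fun n => b + 1 <= k n) (fun n => k n == b) (win L).
have -> : count (predU (fun n => b + 1 <= k n) (fun n => k n == b)) (win L) =
          count (fun n => b <= k n) (win L).
  apply: eq_count => n /=; apply/idP/idP; [case/orP=> [|/eqP]; lia|].
  move=> h; have [e|ne] := eqVneq (k n) b; first by rewrite orbT.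
  rewrite orbF; lia.
have -> : count (predI (fun n => b + 1 <= k n) (fun n => k n == b)) (win L) = 0%N.
  apply/eqP; rewrite -leqn0 leqNgt -has_count; apply/hasPn => n _ /=.
  apply/negP => /andP [h /eqP e]; lia.
have -> : count (fun n => k n == b) (win L) = 1%N.
  have -> : count (fun n => k n == b) (win L) = count_mem b (map k (win L)).
    by rewrite count_map.
  rewrite count_uniq_mem ?(map_inj_uniq inj) ?uniq_win //.
  have [n [Hn Hk]] := cov b Hb.
  by rewrite -Hk map_f // mem_win; lia.
by rewrite addn0.
Qed.

Lemma count_interval k N R L : injective k -> coverk k N R -> (N <= L)%N ->
  forall (d : nat) a, -R <= a -> a + d%:Z <= R + 1 ->
  count (fun n => a <= k n) (win L) = (count (fun n => (a + d%:Z <= k n)%R) (win L) + d)%N.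
Proof.
move=> inj cov NL; elim=> [|d IH] a h1 h2; first by rewrite addr0 addn0.
rewrite IH; [|lia|lia].
rewrite (count_one inj cov NL (b := a + d%:Z)); last lia.
have -> : a + d%:Z + 1 = a + d.+1%:Z by lia.
by rewrite -addnA add1n.
Qed.

Lemma count_shiftval k N R L f : injective k -> coverk k N R -> (N <= L)%N ->
  -R <= f <= R ->
  (count (fun n => f <= k n) (win L))%:Z = (count (fun n => 0 <= k n) (win L))%:Z - f.
Proof.
move=> inj cov NL hf.
have [f0|f0] := lerP 0 f.
  have e : count (fun n => 0 <= k n) (win L) = (count (fun n => (f <= k n)%R) (win L) + absz f)%N.
    have := count_interval inj cov NL (d := absz f) (a := 0) ltac:(lia) ltac:(lia).
    have -> : 0 + (absz f)%:Z = f by lia.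
    exact.
  rewrite e; lia.
have e : count (fun n => f <= k n) (win L) = (count (fun n => (0 <= k n)%R) (win L) + absz f)%N.
  have := count_interval inj cov NL (d := absz f) (a := f) ltac:(lia) ltac:(lia).
  have -> : f + (absz f)%:Z = 0 by lia.
  exact.
rewrite e; lia.
Qed.

Lemma val_shift M N k k' : goodk M k -> Pp k M N ->
  (forall n, k' n = k (n + 1) - k 1) ->
  forall L, (N <= L)%N -> val k' L = val k L - k 1 + 1.
Proof.
move=> [k0 [inj [surj st]]] [cov [p1 p2]] sh L NL.
have M0 := stepb_ge0 st.
have s1 : -M <= k (0 + 1) - k 0 <= M := st 0.
rewrite add0r k0 subr0 in s1.
pose P : pred int := fun n => k 1 <= k n.
have E0 : count (fun n => 0 <= k' n) (win L) = count P [seq n + 1 | n <- win L].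
  rewrite count_map; apply: eq_count => n /=; by rewrite /P sh subr_ge0.
have a := LS2 inj st (lexx M) cov p2 (n := - L%:Z) ltac:(lia).
have b := RS1 inj st (lexx M) cov p1 (n := L.+1%:Z) ltac:(lia).
have E1 : count P [seq n + 1 | n <- win L] = (count P (win L) + 1)%N.
  have := shift_count P L.
  have -> : P (- L%:Z) = false by apply/negbTE; rewrite /P -ltNge; lia.
  have -> : P L.+1%:Z = true by rewrite /P; lia.
  by rewrite addn0.
have E2 : (count P (win L))%:Z = (count (fun n => 0 <= k n) (win L))%:Z - k 1.
  exact: (count_shiftval inj cov NL (f := k 1) ltac:(lia)).
rewrite /val E0 E1 PoszD E2; lia.
Qed.
Lemma closed_fix (T : topologicalType) (f : T -> T) :
  hausdorff_space T -> continuous f -> closed [set y | f y = y].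
Proof.
move=> hT cf y cly; apply: hT => A B nA nB.
have nfA : nbhs y (f @^-1` A) := cf y A nA.
have [z [Fz [Az Bz]]] := cly _ (filterI nfA nB).
by exists z; split=> //; rewrite -Fz.
Qed.

Definition aper (X0 : Type) (a : int -> X0 -> X0) := forall n x, a n x = x -> n = 0.

Lemma aperiodic (X0 : topologicalType) (a : int -> X0 -> X0) :
  hausdorff_space X0 -> is_Zaction a -> Zminimal a -> Ztopfree a -> aper a.
Proof.
move=> hT [a0 [aD ac]] amin afree n x hx.
apply/eqP; apply/negPn/negP => n0.
have cl := closed_fix hT (ac n).
have sub : range (fun m => a m x) `<=` [set y | a n y = y].
  move=> _ [m _ <-] /=; by rewrite -aD addrC aD hx.
have all : [set y | a n y = y] = setT.
  apply/seteqP; split=> // y _.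
  apply: cl; apply: (closure_subset sub); by rewrite amin.
have := afree n n0; rewrite all interiorT => e.
by have : (setT : set X0) x by []; rewrite e.
Qed.

Lemma locconst_bounded (T : topologicalType) (f : T -> int) :
  compact [set: T] -> cont_discr f -> exists M, forall x, -M <= f x <= M.
Proof.
move=> cT cf.
have := (iffLR (compact_near_coveringP _) cT) nat \oo (fun m x => -(m%:Z) <= f x <= m%:Z) _.
case.
  move=> x _.
  exists ([set y | f y = f x], [set m | (absz (f x) <= m)%N]).
    split=> //=; first exact: cf x.
    by exists (absz (f x)).
  move=> [y m] /= [-> h]; lia.
move=> N _ HN; exists N%:Z => x; exact: HN N (leqnn N) x I.
Qed.

Lemma near_window (T : topologicalType) (ca : int -> T -> int) :
  (forall n, cont_discr (ca n)) -> forall x (N : nat),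
  \forall y \near x, forall n, -(N%:Z) <= n <= N%:Z -> ca n y = ca n x.
Proof.
move=> cc x; elim=> [|N IH].
  apply: filterS (cc 0 x) => y h n hn; have -> : n = 0 by lia. exact: h.
apply: filterS2 IH (filterI (cc N.+1%:Z x) (cc (- N.+1%:Z) x)) => y h [h1 h2] n hn.
have [e|ne] := eqVneq n N.+1%:Z; first by rewrite e.
have [e'|ne'] := eqVneq n (- N.+1%:Z); first by rewrite e'.
apply: h; move/eqP: ne; move/eqP: ne'; lia.
Qed.
Definition COEdata {X0 : topologicalType} (a b : int -> X0 -> X0) (phi psi : X0 -> X0)
  (ca cb : int -> X0 -> int) : Prop :=
  homeo phi psi /\ (forall n, cont_discr (ca n)) /\ (forall n, cont_discr (cb n)) /\
  (forall n x, phi (a n x) = b (ca n x) (phi x)) /\ (forall n x, psi (b n x) = a (cb n x) (psi x)).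

Lemma act_cancel (X0 : topologicalType) (a : int -> X0 -> X0) : is_Zaction a ->
  forall q z, a (- q) (a q z) = z.
Proof. by move=> [a0 [aD _]] q z; rewrite -aD addNr a0. Qed.

Lemma act_inj (X0 : topologicalType) (a : int -> X0 -> X0) : is_Zaction a -> aper a ->
  forall p q y, a p y = a q y -> p = q.
Proof.
move=> ha ap p q y e.
have e2 : a (- q) (a p y) = y by rewrite e act_cancel.
have : a (p - q) y = y.
  by case: ha => [_ [aD _]]; rewrite addrC aD e2.
by move/ap => /eqP; rewrite subr_eq0 => /eqP.
Qed.

Lemma cont_discr_comp (T U : topologicalType) (A : Type) (f : U -> A) (p : T -> U) :
  continuous p -> cont_discr f -> cont_discr (f \o p).
Proof. by move=> cp cf x; exact: (cp x _ (cf (p x))). Qed.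


Lemma cocycle (X0 : topologicalType) (a b : int -> X0 -> X0) (phi psi : X0 -> X0)
  (ca cb : int -> X0 -> int) : is_Zaction a -> is_Zaction b -> aper b -> COEdata a b phi psi ca cb ->
  forall n m x, ca (n + m) x = ca n (a m x) + ca m x.
Proof.
move=> ha hb apb [_ [_ [_ [ea eb]]]] n m x.
apply: (act_inj hb apb (y := phi x)).
case: ha => [_ [aD _]]; case: hb => [_ [bD _]].
by rewrite -ea aD ea ea bD.
Qed.

Lemma k_good (X0 : topologicalType) (a b : int -> X0 -> X0) (phi psi : X0 -> X0)
  (ca cb : int -> X0 -> int) M : is_Zaction a -> is_Zaction b -> aper a -> aper b ->
  COEdata a b phi psi ca cb -> (forall x, -M <= ca 1 x <= M) ->
  forall x, goodk M (fun n => ca n x).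
Proof.
move=> ha hb apa apb hc hM x.
have hc' := hc; move: hc' => [[cphi [cpsi [phiK psiK]]] [_ [_ [ea eb]]]].
have cocy := cocycle ha hb apb hc.
split.
  apply: (act_inj hb apb (y := phi x)); rewrite -ea.
  by case: ha => [a0 _]; case: hb => [b0 _]; rewrite a0 b0.
split.
  move=> p q e.
  apply: (act_inj ha apa (y := x)).
  by rewrite -[a p x]phiK -[a q x]phiK ea e -ea.
split.
  move=> v; exists (cb v (phi x)).
  apply: (act_inj hb apb (y := phi x)); rewrite -ea.
  have e : a (cb v (phi x)) x = psi (b v (phi x)) by rewrite eb phiK.
  by rewrite e psiK.
move=> n; rewrite (addrC n 1) cocy addrK; exact: hM.
Qed.

Lemma near_Pp (X0 : topologicalType) (ca : int -> X0 -> int) M N x : (forall n, cont_discr (ca n)) ->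
  Pp (fun n => ca n x) M N -> \forall y \near x, Pp (fun n => ca n y) M N.
Proof.
move=> cc [cov [p1 p2]].
apply: filterS (near_window cc x N) => y hw.
split.
  move=> v hv; have [n [hn e]] := cov v hv; exists n; split=> //; by rewrite hw.
rewrite !hw //; lia.
Qed.

Lemma near_Pm (X0 : topologicalType) (ca : int -> X0 -> int) M N x : (forall n, cont_discr (ca n)) ->
  Pm (fun n => ca n x) M N -> \forall y \near x, Pm (fun n => ca n y) M N.
Proof.
move=> cc [cov [p1 p2]].
apply: filterS (near_window cc x N) => y hw.
split.
  move=> v hv; have [n [hn e]] := cov v hv; exists n; split=> //; by rewrite hw.
rewrite !hw //; lia.
Qed.

Lemma orientation (X0 : topologicalType) (a b : int -> X0 -> X0) (phi psi : X0 -> X0)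
  (ca cb : int -> X0 -> int) M : is_Zaction a -> is_Zaction b -> aper a -> aper b ->
  Zminimal a -> COEdata a b phi psi ca cb -> (forall x, -M <= ca 1 x <= M) ->
  (forall x, exists N, Pp (fun n => ca n x) M N) \/
  (forall x, exists N, Pm (fun n => ca n x) M N).
Proof.
move=> ha hb apa apb amin hc hM.
have g := k_good ha hb apa apb hc hM.
have cc : forall n, cont_discr (ca n) by case: hc => [_ [cc _]].
have cocy := cocycle ha hb apb hc.
have [[x0 [N0 H0]]|none] := pselect (exists x0, exists N, Pp (fun n => ca n x0) M N).
  left => y.
  have [N [H|H]] := exists_window (g y) (lexx M); first by exists N.
  exfalso.
  have cly : closure (range (fun n => a n y)) x0 by rewrite amin.
  have [_ [[m _ <-] Hz]] := cly _ (near_Pp cc H0).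
  apply: (shift_inv (m := m) (g y) (g (a m y)) _ H Hz).
  by move=> n; rewrite cocy addrK.
right => y.
have [N [H|H]] := exists_window (g y) (lexx M); last by exists N.
by exfalso; apply: none; exists y, N.
Qed.

Lemma conj_pos (X0 : topologicalType) (a b : int -> X0 -> X0) (phi psi : X0 -> X0)
  (ca cb : int -> X0 -> int) M :
  is_Zaction a -> is_Zaction b -> aper a -> aper b -> COEdata a b phi psi ca cb ->
  (forall x, -M <= ca 1 x <= M) ->
  (forall x, exists N, Pp (fun n => ca n x) M N) ->
  exists h g : X0 -> X0, homeo h g /\ forall n x, h (a n x) = b n (h x).
Proof.
move=> ha hb apa apb hc hM hor.
have g := k_good ha hb apa apb hc hM.
have hc' := hc; move: hc' => [[cphi [cpsi [phiK psiK]]] [cca [ccb [ea eb]]]].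
have cocy := cocycle ha hb apb hc.
have [a0 [aD acont]] := ha. have [b0 [bD bcont]] := hb.
have [Nf HNf] := choice hor.
pose j x := val (fun n => ca n x) (Nf x).
have jval : forall x N, Pp (fun n => ca n x) M N -> forall L, (N <= L)%N ->
    j x = val (fun n => ca n x) L.
  move=> x N HP L NL.
  rewrite /j (val_const (g x) (lexx M) HP NL).
  rewrite -(val_const (g x) (lexx M) (HNf x) (leq_maxl (Nf x) N)).
  by rewrite (val_const (g x) (lexx M) HP (leq_maxr (Nf x) N)).
have jloc : forall x, \forall y \near x, j y = j x.
  move=> x; apply: filterS (filterI (near_window cca x (Nf x)) (near_Pp cca (HNf x))) => y [hw HP].
  rewrite (jval y _ HP (Nf x) (leqnn _)) /j /val.
  congr (_ - _); congr (Posz _).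
  apply: eq_in_count => n; rewrite mem_win => hn /=; by rewrite hw.
have jshift : forall x, j (a 1 x) = j x - ca 1 x + 1.
  move=> x; pose L := maxn (Nf x) (Nf (a 1 x)).
  rewrite (jval _ _ (HNf (a 1 x)) L (leq_maxr _ _)).
  rewrite (jval _ _ (HNf x) L (leq_maxl _ _)).
  apply: (val_shift (g x) (HNf x) _ (leq_maxl _ _)).
  by move=> n; rewrite cocy addrK.
pose h x := b (j x) (phi x).
pose gi y := a (- j (psi y)) (psi y).
have h1 : forall x, h (a 1 x) = b 1 (h x).
  move=> x; rewrite /h jshift ea -bD -bD; congr (b _ _); lia.
have hnat : forall (m : nat) x, h (a m%:Z x) = b m%:Z (h x).
  elim=> [|m IH] x; first by rewrite a0 b0.
  have -> : m.+1%:Z = 1 + m%:Z by lia.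
  by rewrite aD h1 IH bD.
have hn : forall n x, h (a n x) = b n (h x).
  move=> [] m x; first exact: hnat.
  rewrite NegzE.
  have e : b m.+1%:Z (h (a (- m.+1%:Z) x)) = h x.
    by rewrite -hnat -aD addrN a0.
  by rewrite -e -bD addNr b0.
have hg : forall y, h (gi y) = y.
  move=> y; rewrite /gi hn /h -bD addNr b0; exact: psiK.
have hinj : injective h.
  move=> x x' e.
  have e1 : phi x' = b (j x - j x') (phi x).
    have := congr1 (b (- j x')) e; rewrite /h -!bD addNr b0 => <-.
    by rewrite addrC.
  have e2 : x' = a (cb (j x - j x') (phi x)) x.
    transitivity (psi (phi x')); first by rewrite phiK.
    by rewrite e1 eb phiK.
  have e3 : b (cb (j x - j x') (phi x)) (h x) = h x by rewrite -hn -e2.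
  have := apb _ _ e3 => p0.
  by rewrite e2 p0 a0.
have gh : cancel h gi by move=> x; apply: hinj; rewrite hg.
exists h, gi; split; last exact: hn.
split.
  move=> x.
  have e : {near x, (fun y => b (j x) (phi y)) =1 h}.
    by apply: filterS (jloc x) => y /= jy; rewrite /h jy.
  apply: cvg_trans (near_eq_cvg e) _.
  exact: (continuous_comp (cphi x) (bcont (j x) (phi x))).
split.
  move=> y.
  have jl : \forall z \near y, j (psi z) = j (psi y) := cpsi y _ (jloc (psi y)).
  have e : {near y, (fun z => a (- j (psi y)) (psi z)) =1 gi}.
    by apply: filterS jl => z /= jz; rewrite /gi jz.
  apply: cvg_trans (near_eq_cvg e) _.
  exact: (continuous_comp (cpsi y) (acont (- j (psi y)) (psi y))).
by split.
Qed.
Lemma cont_pair (X : topologicalType) (F : bool -> bool) (f : X -> X) :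
  continuous f -> continuous (fun p : bool * X => (F p.1, f p.2)).
Proof.
move=> cf [c x].
have h1 : (fun p : bool * X => F p.1) @ nbhs (c, x) --> F c.
  apply/discrete_cvg => /=.
  exists ([set c], setT) => /=; first by split; [exact: (@discrete_set1 bool c) | exact: filterT].
  by move=> [c' y] /= [-> _].
have h2 : (fun p : bool * X => f p.2) @ nbhs (c, x) --> f x.
  apply: cvg_comp (@cvg_snd _ _ (nbhs c) (nbhs x) _) _.
  exact: cf.
exact: (cvg_pair h1 h2).
Qed.
Lemma cont_inj (X : topologicalType) (x : X) : (fun y : X => (false, y)) @ x --> (false, x).
Proof.
have h1 : (fun y : X => false) @ x --> false by exact: cvg_cst.
have h2 : (fun y : X => y) @ x --> x by exact: cvg_id.
exact: (cvg_pair h1 h2).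
Qed.
Lemma delta_eq n bb c : delta (n, bb) c = if xorb bb c then -n else n.
Proof. case: bb; case: c; rewrite /delta /=; lia. Qed.
Lemma dcoset_act_eq n bb c : dcoset_act (n, bb) c = xorb bb c.
Proof. by case: bb; case: c. Qed.

Lemma homeo_pair (X : topologicalType) (F : bool -> bool) (h g : X -> X) :
  involutive F -> homeo h g ->
  homeo (fun p : bool * X => (F p.1, h p.2)) (fun p : bool * X => (F p.1, g p.2)).
Proof.
move=> iF [ch [cg [hK gK]]]; split; first exact: cont_pair.
split; first exact: cont_pair.
by split; move=> [c x] /=; rewrite iF ?hK ?gK.
Qed.

Lemma id_auto : dinf_automorphism id.
Proof. by split=> //; exists id. Qed.

Theorem mainTheorem12 (X0 : topologicalType)
  (hcomp : compact [set: X0]) (hhaus : hausdorff_space X0)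
  (alpha beta : int -> X0 -> X0)
  (ha : is_Zaction alpha) (hb : is_Zaction beta)
  (hamin : Zminimal alpha) (hbmin : Zminimal beta)
  (hafree : Ztopfree alpha) (hbfree : Ztopfree beta) :
  ((exists c c' : Dinf -> bool * X0 -> Dinf,
       (forall g, cont_discr (c g)) /\ (forall g, cont_discr (c' g)) /\
       (forall g p, ind_act alpha g p = ind_act beta (c g p) p) /\
       (forall g p, ind_act beta g p = ind_act alpha (c' g p) p)) ->
     Z_coe alpha beta)
  /\
  (Z_coe alpha beta -> Dinf_conj (ind_act alpha) (ind_act beta)).
Proof.
have apa := aperiodic hhaus ha hamin hafree.
have apb := aperiodic hhaus hb hbmin hbfree.
split.
  move=> [c [c' [cc [cc' [e e']]]]].
  have cd : forall (d : Dinf -> bool * X0 -> Dinf) n,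
      (forall g, cont_discr (d g)) -> cont_discr (fun x => (d (dZ n) (false, x)).1).
    move=> d n hd x.
    have H : nbhs x [set y | d (dZ n) (false, y) = d (dZ n) (false, x)].
      exact: (@cont_inj _ x _ (hd (dZ n) (false, x))).
    rewrite /prop_near1.
    by apply: (filterS (F := nbhs x)) H => y /= ->.
  have key : forall (u v : int -> X0 -> X0) (d : Dinf -> bool * X0 -> Dinf),
      (forall g p, ind_act u g p = ind_act v (d g p) p) ->
      forall n x, u n x = v (d (dZ n) (false, x)).1 x.
    move=> u v d hd n x; have := hd (dZ n) (false, x).
    case: (d (dZ n) (false, x)) => m bb /=.
    rewrite /ind_act /= !delta_eq !dcoset_act_eq /=.
    case: bb => /= h; [by case: h | by case: h => ->].
  exists (fun x => x), (fun x => x), (fun n x => (c (dZ n) (false, x)).1), (fun n x => (c' (dZ n) (false, x)).1).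
  split; first by split; [move=> x; exact: cvg_id | split; [move=> x; exact: cvg_id|]].
  split; first by move=> n; exact: (cd c n cc).
  split; first by move=> n; exact: (cd c' n cc').
  split; move=> n x /=; [exact: (key _ _ _ e) | exact: (key _ _ _ e')].
move=> [phi [psi [ca [cb hc]]]].
have [M hM] := locconst_bounded hcomp (let: conj _ (conj cc _) := hc in cc 1).
have [hor|hor] := orientation ha hb apa apb hamin hc hM.
  have [h [g [hg hh]]] := conj_pos ha hb apa apb hc hM hor.
  exists (fun p => (p.1, h p.2)), (fun p => (p.1, g p.2)), id.
  split; first exact: (homeo_pair (F := id)).
  split; first exact: id_auto.
  move=> [n bb] [c x]; by rewrite /ind_act /= hh.
pose beta' := fun n => beta (- n).
have hb' : is_Zaction beta'.
  case: hb => [b0 [bD bc]]; split; first by rewrite /beta' oppr0.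
  split; last by move=> n; exact: bc.
  by move=> m n x; rewrite /beta' opprD bD.
have apb' : aper beta' by move=> n x /apb /eqP; rewrite oppr_eq0 => /eqP.
have hc' : COEdata alpha beta' phi psi (fun n x => - ca n x) (fun n y => cb (- n) y).
  case: hc => [hp [cc [ccb [ea eb]]]]; split=> //.
  split; first by move=> n x; apply: filterS (cc n x) => y /= ->.
  split; first by move=> n; exact: ccb.
  split; first by move=> n x; rewrite /beta' opprK ea.
  by move=> n y; rewrite /beta' eb.
have hM' : forall x, -M <= - ca 1 x <= M by move=> x; have := hM x; lia.
have hor' : forall x, exists N, Pp (fun n => - ca n x) M N.
  by move=> x; have [N HN] := hor x; exists N; exact: Pm_Pp.
have [h [g [hg hh]]] := conj_pos ha hb' apa apb' hc' hM' hor'.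
exists (fun p => (~~ p.1, h p.2)), (fun p => (~~ p.1, g p.2)), id.
split; first exact: (homeo_pair (F := negb) negbK).
split; first exact: id_auto.
move=> [n bb] [c x]; rewrite /ind_act /= hh /beta' !dcoset_act_eq !delta_eq.
by case: bb; case: c => //=; rewrite opprK.
Qed.
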